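(* Let $q$ be a prime power and let $U(X), V(X) \in \mathbb{F}_q[X]$ with $\deg(V) < q$ and $i \geq 0$ an integer, such that $U(X) = V(X)\cdot \Lambda^i(X)$, where $\Lambda(X) = X^q - X$. Then for every integer $\ell$ with $0 \leq \ell < q$, $$U^{[\ell]}(X) \equiv (-1)^i \cdot V^{[\ell - i]}(X) \pmod{\Lambda(X)},$$ with the convention that $V^{[j]}(X) = 0$ for $j < 0$.
   Context: For a field $\mathbb{F}$ and $A(X) \in \mathbb{F}[X]$, the $\ell$-th Hasse derivative $A^{[\ell]}(X)$ is the coefficient of $Z^\ell$ in the expansion of $A(X+Z)$ as a polynomial in $Z$ with coefficients in $\mathbb{F}[X]$. *)

(* Defs.v *)
From HB Require Import structures.
From mathcomp Require Import all_boot all_order all_algebra all_field.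
Set Implicit Arguments. Unset Strict Implicit. Unset Printing Implicit Defensive.
Import GRing.Theory.
Local Open Scope ring_scope.

(* A(X+Z) as an element of {poly {poly F}}: the outer variable is Z,
   the inner variable (constants 'X%:P) is X. *)
Definition shiftXZ (F : fieldType) (A : {poly F}) : {poly {poly F}} :=
  (A ^:P) \Po ('X + ('X : {poly F})%:P).

Definition hasse (F : fieldType) (A : {poly F}) (l : nat) : {poly F} :=
  (shiftXZ A)`_l.

Definition hasseZ (F : fieldType) (A : {poly F}) (j : int) : {poly F} :=
  match j with Posz n => hasse A n | Negz _ => 0 end.

Definition Lambda (F : finFieldType) : {poly F} := 'X^#|F| - 'X.

(* Main.v *)
Require Import Defs.
From HB Require Import structures.
From mathcomp Require Import all_boot all_order all_algebra all_field.
From mathcomp Require Import ring.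
Import GRing.Theory.
Local Open Scope ring_scope.

Lemma cardnat (F : finFieldType) : exists2 p, p \in [pchar F] & p.-nat #|F|.
Proof.
have [p pr pc] := finPcharP F.
exists p => //.
have := card_pprimeChar pc. move=> ->. by rewrite pnatX pnat_id.
Qed.

Lemma cardnat2 (F : finFieldType) : [pchar {poly {poly F}}].-nat #|F|.
Proof.
have [p pc pn] := cardnat F.
have H : p \in [pchar {poly {poly F}}] by rewrite !pchar_poly.
by rewrite (eq_pnat _ (pcharf_eq H)).
Qed.

Lemma shiftM (F : fieldType) (A B : {poly F}) :
  shiftXZ (A * B) = shiftXZ A * shiftXZ B.
Proof. by rewrite /shiftXZ rmorphM comp_polyM. Qed.

Lemma shiftX (F : fieldType) (A : {poly F}) n :
  shiftXZ (A ^+ n) = shiftXZ A ^+ n.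
Proof.
elim: n => [|n IH]; first by rewrite /shiftXZ !expr0 rmorph1 comp_polyC.
by rewrite !exprS shiftM IH.
Qed.

Lemma shiftL (F : finFieldType) :
  shiftXZ (Lambda F) = 'X^#|F| - 'X + (Lambda F)%:P.
Proof.
rewrite /shiftXZ /Lambda rmorphB /= map_polyXn map_polyX comp_polyB comp_Xn_poly
  comp_polyX exprDn_pchar ?cardnat2 // polyCB rmorphXn.
ring.
Qed.

Lemma coefZ (F : fieldType) (q i j : nat) : (0 < q)%N -> (j < q)%N ->
  ((('X^q - 'X) ^+ i : {poly {poly F}})`_j) = ((-1) ^+ i) *+ (j == i).
Proof.
move=> q0; elim: i j => [|i IH] j jq.
  by rewrite expr0 coef1 expr0.
rewrite exprSr mulrBr coefB coefMXn coefMX jq.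
case: j jq => [|j] jq /=; first by rewrite subr0; case: (0 == i)%N; rewrite ?mulr0n ?mulr1n /=.
rewrite IH ?(ltn_trans _ jq) // sub0r exprS eqSS.
by case: (j == i); rewrite ?mulN1r // oppr0.
Qed.
From mathcomp Require Import zify.

Theorem lemma2p4 (F : finFieldType) (U V : {poly F}) (i : nat) :
  (size V <= #|F|)%N ->
  U = V * (Lambda F) ^+ i ->
  forall l : nat, (l < #|F|)%N ->
    hasse U l %% Lambda F
    = ((-1) ^+ i * hasseZ V (l%:Z - i%:Z)) %% Lambda F.
Proof.
move=> _ -> l lq.
have q0 : (0 < #|F|)%N by apply: leq_ltn_trans lq.
set Z : {poly {poly F}} := 'X^#|F| - 'X.
set c : {poly {poly F}} := (Lambda F)%:P.
have [W HW] : exists W, (Z + c) ^+ i = Z ^+ i + c * W.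
  have e : Z + c - Z = c by rewrite addrC addKr.
  exists (\sum_(k < i) (Z + c) ^+ (i.-1 - k) * Z ^+ k).
  have := subrXX (Z + c) Z i; rewrite e => <-; by rewrite [RHS]addrC subrK.
rewrite /hasse shiftM shiftX shiftL -/Z -/c HW mulrDr coefD mulrCA coefCM.
rewrite modpD modp_mulr addr0; congr (_ %% _).
rewrite coefM.
case: (leqP i l) => il.
  rewrite subzn // [hasseZ _ _]/hasseZ /hasse.
  have hl : (l - i < l.+1)%N by rewrite ltnS leq_subr.
  rewrite (bigD1 (Ordinal hl)); last by [].
  rewrite big1; last first.
    move=> j /eqP hj; rewrite coefZ //; last first.
      by apply: leq_ltn_trans lq; rewrite leq_subr.
    have -> : (l - j == i)%N = false.
      apply/negP => /eqP e; apply: hj; apply: val_inj.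
      change (nat_of_ord j = l - i)%N.
      have := ltn_ord j; lia.
    by rewrite mulr0n mulr0.
  change (nat_of_ord (Ordinal hl)) with (l - i)%N.
  rewrite Monoid.mulm1 coefZ //; last by apply: leq_ltn_trans lq; rewrite leq_subr.
  by rewrite subKn // eqxx mulr1n mulrC.
have -> : (l%:Z - i%:Z) = Negz (i - l).-1.
  by rewrite NegzE prednK ?subn_gt0 // -subzn ?(ltnW il) // opprB.
rewrite [hasseZ _ _]/hasseZ mulr0 big1 // => j _.
rewrite coefZ //; last by apply: leq_ltn_trans lq; rewrite leq_subr.
have -> : (l - j == i)%N = false by apply/negP => /eqP e; lia.
by rewrite mulr0n mulr0.
Qed.
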